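(* Let $n\ge3$, let $t_1,\dots,t_m\in\mathcal{T}_n$ and let $w_1,\dots,w_m$ be positive real weights, and let $c$ be the weighted asymmetric tropical consensus tree of $(t_1,w_1),\dots,(t_m,w_m)$. Then for all distinct leaves $i,j,k\in[n]$: (Pareto) if every $t_l$ contains the rooted triple $ij|k$, then $c$ contains $ij|k$; (co-Pareto) if $c$ contains $ij|k$, then at least one $t_l$ contains $ij|k$.
   Context: $N=\binom n2$, coordinates of $\mathbb{R}^N$ indexed by pairs $\{i,j\}\subset[n]$. An ultrametric is $\delta\in\mathbb{R}^N$ such that for all distinct $i,j,k$ the maximum of $\delta(i,j),\delta(i,k),\delta(j,k)$ is attained at least twice; ultrametrics are exactly the leaf-to-leaf distance vectors of equidistant rooted phylogenetic trees. $\mathcal{T}_n=\{-\delta:\delta\text{ ultrametric}\}$, viewed in $\mathbb{R}^N/\mathbb{R}\mathbf{1}_N$ and identified with $H_N=\{x\in\mathbb{R}^N:\sum x=0\}$. For $x,y\in H_N$, $d_\Delta(x,y)=N\max_p(x_p-y_p)$; the weighted Fermat–Weber set is $\mathrm{FW}(T,w)=\operatorname{argmin}_{x\in H_N}\sum_l w_l d_\Delta(x,t_l)$, a bounded polytope. The weighted asymmetric tropical consensus tree is the classical average of the vertices of $\mathrm{FW}(T,w)$ (a point of $\mathcal{T}_n$). A point $x\in\mathcal{T}_n$, with $\delta=-x$ (any representative), contains the rooted triple $ij|k$ if $\delta(i,j)<\delta(i,k)=\delta(j,k)$. *)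

(* Defs.v *)
From HB Require Import structures.
From mathcomp Require Import all_boot all_order all_algebra.
From mathcomp Require Import reals.
Set Implicit Arguments. Unset Strict Implicit. Unset Printing Implicit Defensive.
Import Order.TTheory GRing.Theory Num.Theory.
Local Open Scope ring_scope.

(* Unordered pairs {i,j} of distinct leaves of [n] = 'I_n: the N = 'C(n,2)
   coordinates of R^N. *)
Definition Pr (n : nat) := {A : {set 'I_n} | #|A| == 2}.

Notation pt R n := {ffun Pr n -> R}.

(* Coordinate x({i,j}) (only meaningful for i != j; 0 otherwise). *)
Definition ent (R : realType) (n : nat) (x : pt R n) (i j : 'I_n) : R :=
  if insub [set i; j] is Some p then x p else 0.

Definition ultrametric (R : realType) (n : nat) (d : pt R n) : Prop :=
  forall i j k : 'I_n, i != j -> i != k -> j != k ->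
    let a := ent d i j in let b := ent d i k in let c := ent d j k in
    [|| (a == b) && (c <= a), (a == c) && (b <= a) | (b == c) && (a <= b)].

Definition inH (R : realType) (n : nat) (x : pt R n) : Prop :=
  \sum_(p : Pr n) x p = 0.

(* Membership in T_n = {-delta : delta ultrametric}, identified with H_N. *)
Definition inTn (R : realType) (n : nat) (x : pt R n) : Prop :=
  inH x /\ ultrametric (- x).

(* Asymmetric tropical distance d_Delta(x,y) = N * max_p (x_p - y_p), for
   x, y in H_N (there the max is >= 0, so 0 is a harmless seed). *)
Definition dDelta (R : realType) (n : nat) (x y : pt R n) : R :=
  'C(n, 2)%:R * \big[Num.max/0]_(p : Pr n) (x p - y p).

Definition FWobj (R : realType) (n m : nat) (t : 'I_m -> pt R n)
  (w : 'I_m -> R) (x : pt R n) : R :=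
  \sum_(l < m) w l * dDelta x (t l).

Definition inFW (R : realType) (n m : nat) (t : 'I_m -> pt R n)
  (w : 'I_m -> R) (x : pt R n) : Prop :=
  inH x /\ forall y : pt R n, inH y -> FWobj t w x <= FWobj t w y.

Definition is_vertex (R : realType) (n : nat) (S : pt R n -> Prop)
  (x : pt R n) : Prop :=
  S x /\ forall (y z : pt R n) (a : R), S y -> S z -> 0 < a -> a < 1 ->
    (forall p, x p = a * y p + (1 - a) * z p) -> y = z.

Definition is_consensus (R : realType) (n m : nat) (t : 'I_m -> pt R n)
  (w : 'I_m -> R) (c : pt R n) : Prop :=
  exists s : seq (pt R n),
    [/\ uniq s,
        (forall v, v \in s <-> is_vertex (inFW t w) v) &
        forall p, c p = (size s)%:R^-1 * \sum_(v <- s) v p].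

Definition contains_triple (R : realType) (n : nat) (x : pt R n)
  (i j k : 'I_n) : Prop :=
  let d := - x in ent d i j < ent d i k /\ ent d i k = ent d j k.

(* Main.v *)
Require Import Defs.
From HB Require Import structures.
From mathcomp Require Import all_boot all_order all_algebra.
From mathcomp Require Import reals.
From mathcomp Require Import lra ring.
From mathcomp Require Import boolp classical_sets topology normedtype derive.
Import Order.TTheory GRing.Theory Num.Theory.
Import numFieldNormedType.Exports.
Local Open Scope ring_scope.
Set Implicit Arguments. Unset Strict Implicit.

Lemma entN (R : realType) n (x : pt R n) i j : ent (- x) i j = - ent x i j.
Proof. by rewrite /ent; case: insub => [p|]; rewrite ?ffunE ?oppr0. Qed.

Lemma ent_pair (R : realType) n (i j : 'I_n) : i != j ->
  exists p : Pr n, forall x : pt R n, ent x i j = x p.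
Proof.
move=> ij; have h : #|[set i; j]| == 2 by rewrite cards2 ij.
by exists (exist (fun A : {set 'I_n} => #|A| == 2) _ h) => x; rewrite /ent insubT.
Qed.

Lemma H_nonneg (R : realType) n (x y : pt R n) (p0 : Pr n) : inH x -> inH y ->
  exists p, 0 <= x p - y p.
Proof.
move=> hx hy; case: (boolP [exists p, 0 <= x p - y p]) => [/existsP//|/existsPn H].
have : \sum_p (x p - y p) < 0.
  rewrite (bigD1 p0) //=.
  have h0 : x p0 - y p0 < 0 by rewrite ltNge H.
  apply: (le_lt_trans (y := x p0 - y p0 + 0)); last by rewrite addr0.
  rewrite lerD2l; apply: sumr_le0 => p _; apply: ltW; rewrite ltNge; exact: H.
by rewrite sumrB hx hy subrr ltxx.
Qed.

Definition hval (R : realType) n (x y : pt R n) := \big[Num.max/0]_(p : Pr n) (x p - y p).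

Lemma FW_minplus (R : realType) (n m : nat) (t : 'I_m -> pt R n) (w : 'I_m -> R)
  (x : pt R n) : (0 < m)%N -> (0 < 'C(n, 2))%N -> (forall l, inH (t l)) ->
  (forall l, 0 < w l) -> inFW t w x ->
  forall p, exists l, x p = t l p + hval x (t l).
Proof.
move=> m0 C0 Ht Hw [Hx Hmin] p0.
have le1 l p : x p <= t l p + hval x (t l).
  by rewrite -lerBlDl; apply: (le_bigmax _ (fun q => x q - t l q)).
case: (boolP [exists l, x p0 == t l p0 + hval x (t l)]) => [/existsP[l /eqP]|/existsPn H]; first by exists l.
exfalso.
have lt1 l : 0 < t l p0 + hval x (t l) - x p0.
  by rewrite subr_gt0 lt_neqAle le1 andbT; exact: H.
pose e := \big[Num.min/1]_l (t l p0 + hval x (t l) - x p0).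
have e0 : 0 < e.
  by apply: (big_ind (fun v => 0 < v)) => // a b ha hb; rewrite lt_min ha hb.
have el l : e <= t l p0 + hval x (t l) - x p0 by apply: bigmin_le.
have hd : (0 < #|{: Pr n}|)%N by apply/card_gt0P; exists p0.
pose d : R := #|{: Pr n}|%:R.
have d0 : 0 < d by rewrite ltr0n.
pose dl := e / d.
have dl0 : 0 < dl by rewrite divr_gt0.
pose y : pt R n := [ffun p => x p + (if p == p0 then e else 0) - dl].
have Hy : inH y.
  rewrite /inH.
  under eq_bigr do rewrite ffunE.
  rewrite sumrB big_split /= Hx add0r sumr_const.
  rewrite (bigD1 p0) //= eqxx big1 ?addr0; last by move=> p /negbTE ->.
  rewrite (_ : #|xpredT| = #|{: Pr n}|) //.
  have -> : dl *+ #|{: Pr n}| = dl * d by rewrite mulr_natr.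
  by rewrite /dl divfK ?subrr // gt_eqF.
have hy l : hval y (t l) <= hval x (t l) - dl.
  have [q hq] := H_nonneg p0 Hy (Ht l).
  apply: bigmax_le => [|p _].
    apply: le_trans hq _; rewrite ffunE.
    case: eqP => [->|_]; first by have := el l; lra.
    have hq' : x q - t l q <= hval x (t l) := le_bigmax 0 (fun q => x q - t l q) q.
    lra.
  rewrite ffunE; case: eqP => [->|_]; first by have := el l; lra.
  have hq' : x p - t l p <= hval x (t l) := le_bigmax 0 (fun q => x q - t l q) p.
  lra.
have := Hmin y Hy; apply/negP; rewrite -ltNge.
pose C : R := 'C(n, 2)%:R.
have C0' : 0 < C by rewrite ltr0n.
rewrite /FWobj /dDelta.
apply: (le_lt_trans (y := \sum_(l < m) w l * (C * (hval x (t l) - dl)))).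
  apply: ler_sum => l _; rewrite ler_pM2l ?Hw // ler_pM2l //; exact: hy.
have -> : \sum_(l < m) w l * (C * (hval x (t l) - dl)) =
  \sum_(l < m) w l * (C * hval x (t l)) - \sum_(l < m) w l * (C * dl).
  by rewrite -sumrB; apply: eq_bigr => l _; rewrite mulrBr mulrBr.
rewrite ltrBlDr ltrDl.
pose l0 : 'I_m := Ordinal m0.
rewrite (bigD1 l0) //=; apply: (lt_le_trans (y := w l0 * (C * dl) + 0)).
  by rewrite addr0 mulr_gt0 ?Hw // mulr_gt0.
rewrite lerD2l; apply: sumr_ge0 => l _; apply: mulr_ge0; first exact: ltW.
by apply: mulr_ge0; apply: ltW.
Qed.
Lemma cont_sum (R : realType) (T : topologicalType) (I : Type) (r : seq I) (P : pred I)
  (f : I -> T -> R) : (forall i, continuous (f i)) ->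
  continuous (fun x => \sum_(i <- r | P i) f i x).
Proof.
move=> H; elim: r => [|a r IH].
  under eq_fun do rewrite big_nil; exact: cst_continuous.
under eq_fun do rewrite big_cons.
case: (P a).
  by move=> x; apply: continuousD; [exact: H|exact: IH].
exact: IH.
Qed.

Lemma cont_max (R : realType) (T : topologicalType) (I : Type) (r : seq I) (P : pred I)
  (f : I -> T -> R) (x0 : R) : (forall i, continuous (f i)) ->
  continuous (fun x => \big[Num.max/x0]_(i <- r | P i) f i x).
Proof.
move=> H; elim: r => [|a r IH].
  under eq_fun do rewrite big_nil; exact: cst_continuous.
under eq_fun do rewrite big_cons.
case: (P a).
  by move=> x; apply: (@continuous_max _ _ (f a) (fun x => \big[Num.max/x0]_(j <- r | P j) f j x)); [exact: H|exact: IH].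
exact: IH.
Qed.

Definition toF (R : realType) n (v : 'rV[R]_#|{: Pr n}|) : pt R n :=
  [ffun p => v ord0 (enum_rank p)].
Definition toV (R : realType) n (x : pt R n) : 'rV[R]_#|{: Pr n}| :=
  \row_i x (enum_val i).

Lemma toVK (R : realType) n (x : pt R n) : toF (toV x) = x.
Proof. by apply/ffunP => p; rewrite !ffunE mxE enum_rankK. Qed.

Lemma cont_toF (R : realType) n (p : Pr n) :
  continuous (fun v : 'rV[R]_#|{: Pr n}| => toF v p).
Proof.
have -> : (fun v : 'rV[R]_#|{: Pr n}| => toF v p) = (fun v => v ord0 (enum_rank p)).
  by apply: funext => v; rewrite ffunE.
exact: coord_continuous.
Qed.

Lemma cont_FWobj (R : realType) (n m : nat) (t : 'I_m -> pt R n) (w : 'I_m -> R) :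
  continuous (fun v : 'rV[R]_#|{: Pr n}| => FWobj t w (toF v)).
Proof.
rewrite /FWobj /dDelta; apply: cont_sum => l x.
have hm : continuous (fun v : 'rV[R]_#|{: Pr n}| => \big[Num.max/0]_(p : Pr n) (toF v p - t l p)).
  apply: (@cont_max R _ _ _ _ (fun p v => toF v p - t l p)) => p y.
  by apply: continuousB; [exact: cont_toF|exact: cst_continuous].
have hm2 : continuous (fun v : 'rV[R]_#|{: Pr n}| => 'C(n, 2)%:R * \big[Num.max/0]_(p : Pr n) (toF v p - t l p)).
  move=> y; have := @continuousM R _ (fun _ => 'C(n, 2)%:R) _ y (@cst_continuous _ _ _ y) (hm y); exact.
have := @continuousM R _ (fun _ => w l) _ x (@cst_continuous _ _ _ x) (hm2 x); exact.
Qed.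

Lemma cont_sq (R : realType) (n : nat) :
  continuous (fun v : 'rV[R]_#|{: Pr n}| => \sum_p toF v p * toF v p).
Proof.
apply: cont_sum => p x.
have := @continuousM R _ (fun v => toF v p) (fun v => toF v p) x (@cont_toF R n p x) (@cont_toF R n p x); exact.
Qed.

Lemma FWobj_ge (R : realType) (n m : nat) (t : 'I_m -> pt R n) (w : 'I_m -> R) (y : pt R n) l0 :
  (forall l, 0 < w l) -> w l0 * ('C(n, 2)%:R * hval y (t l0)) <= FWobj t w y.
Proof.
move=> Hw; rewrite /FWobj /dDelta (bigD1 l0) //= lerDl; apply: sumr_ge0 => l _.
apply: mulr_ge0; first exact: ltW.
by apply: mulr_ge0; [exact: ler0n|exact: bigmax_ge_id].
Qed.

Definition Mb (R : realType) (n m : nat) (t : 'I_m -> pt R n) (w : 'I_m -> R) (l0 : 'I_m) : R :=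
  #|{: Pr n}|%:R * (FWobj t w 0 / (w l0 * 'C(n, 2)%:R) + \sum_p `|t l0 p|).

Lemma FW_bound (R : realType) (n m : nat) (t : 'I_m -> pt R n) (w : 'I_m -> R) (l0 : 'I_m) :
  (0 < 'C(n, 2))%N -> (forall l, 0 < w l) -> forall y : pt R n, inH y ->
  FWobj t w y <= FWobj t w 0 ->
  forall q, - Mb t w l0 <= y q <= Mb t w l0.
Proof.
move=> C0 Hw y Hy Hle q.
set C : R := 'C(n, 2)%:R.
have Cp : 0 < C by rewrite ltr0n.
have wC : 0 < w l0 * C by rewrite mulr_gt0 ?Hw.
have F0 : 0 <= FWobj t w 0.
  apply: le_trans (FWobj_ge t 0 l0 Hw); apply: mulr_ge0; first exact: ltW.
  by apply: mulr_ge0; [exact: ler0n|exact: bigmax_ge_id].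
set A := FWobj t w 0 / (w l0 * C) + \sum_p `|t l0 p|.
have A0 : 0 <= A by apply: addr_ge0; [apply: divr_ge0 => //; exact: ltW|apply: sumr_ge0 => p _].
have up p : y p <= A.
  have h1 : y p - t l0 p <= hval y (t l0) := le_bigmax 0 (fun q => y q - t l0 q) p.
  have h2 : hval y (t l0) <= FWobj t w 0 / (w l0 * C).
    rewrite ler_pdivlMr // mulrC -mulrA.
    exact: le_trans (FWobj_ge t y l0 Hw) Hle.
  have h3 : t l0 p <= \sum_p `|t l0 p|.
    apply: le_trans (ler_norm _) _; rewrite (bigD1 p) //= lerDl.
    by apply: sumr_ge0.
  rewrite /A; lra.
have hd : (0 < #|{: Pr n}|)%N by apply/card_gt0P; exists q.
have d1 : 1 <= (#|{: Pr n}|%:R : R) by rewrite ler1n.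
have sA : \sum_(p : Pr n) A = #|{: Pr n}|%:R * A.
  by rewrite sumr_const (_ : #|xpredT| = #|{: Pr n}|) // mulr_natl.
have lo : - (#|{: Pr n}|%:R * A) <= y q.
  have e : y q + \sum_(p | p != q) y p = 0 by move: Hy; rewrite /inH (bigD1 q).
  have s1 : \sum_(p | p != q) y p <= \sum_(p | p != q) A by apply: ler_sum => p _.
  have s2 : \sum_(p | p != q) A <= \sum_(p : Pr n) A by rewrite [X in _ <= X](bigD1 q) //= lerDr.
  lra.
have : A <= #|{: Pr n}|%:R * A by rewrite ler_peMl.
rewrite /Mb -/C -/A; have := up q; lra.
Qed.

Local Open Scope classical_set_scope.
Local Open Scope ring_scope.
Lemma FW_vertex (R : realType) (n m : nat) (t : 'I_m -> pt R n) (w : 'I_m -> R) :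
  (3 <= n)%N -> (0 < m)%N -> (forall l, inH (t l)) -> (forall l, 0 < w l) ->
  exists v, is_vertex (inFW t w) v.
Proof.
move=> n3 m0 Ht Hw.
have C0 : (0 < 'C(n, 2))%N by rewrite bin_gt0; apply: leq_trans n3.
pose l0 : 'I_m := Ordinal m0.
pose M := Mb t w l0.
pose Box := [set v : 'rV[R]_#|{: Pr n}| | forall i, `[- M, M]%classic (v ord0 i)].
have cBox : compact Box.
  by apply: (@rV_compact _ _ (fun _ => `[- M, M]%classic)) => _; exact: segment_compact.
pose Hs := fun v : 'rV[R]_#|{: Pr n}| => \sum_p toF v p.
have cHs : continuous Hs by apply: cont_sum => p; exact: cont_toF.
pose G := fun v : 'rV[R]_#|{: Pr n}| => FWobj t w (toF v).
have cG : continuous G by exact: cont_FWobj.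
pose K1 := Box `&` (Hs @^-1` [set x | x = 0]).
have cK1 : compact K1.
  apply: compact_closedI => //; apply: preimage_closed; last exact: closed_eq.
  by move=> x _; exact: cHs.
have inBox y : inH y -> FWobj t w y <= FWobj t w 0 -> Box (toV y).
  move=> Hy Hle i /=; rewrite in_itv /= mxE.
  exact: (FW_bound l0 C0 Hw Hy Hle).
have H0 : inH (0 : pt R n) by rewrite /inH big1 // => p _; rewrite ffunE.
have inK1 y : inH y -> FWobj t w y <= FWobj t w 0 -> K1 (toV y).
  by move=> Hy Hle; split; [exact: inBox|rewrite /= /Hs toVK].
have K1ne : K1 !=set0 by exists (toV 0); apply: inK1.
have [v1 /set_mem K1v1 v1min] := EVT_min_rV K1ne cK1 (continuous_subspaceT cG).
have Gmin y : inH y -> FWobj t w (toF v1) <= FWobj t w y.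
  move=> Hy; case: (leP (FWobj t w y) (FWobj t w 0)) => Hle.
    by have := v1min (toV y) (mem_set (inK1 y Hy Hle)); rewrite /G toVK.
  apply: le_trans (ltW Hle).
  by have := v1min (toV 0) (mem_set (inK1 0 H0 (lexx _))); rewrite /G toVK.
pose K2 := K1 `&` (G @^-1` [set x | x = G v1]).
have cK2 : compact K2.
  apply: compact_closedI => //; apply: preimage_closed; last exact: closed_eq.
  by move=> x _; exact: cG.
have K2ne : K2 !=set0 by exists v1.
pose Q := fun v : 'rV[R]_#|{: Pr n}| => \sum_p toF v p * toF v p.
have cQ : continuous Q by exact: cont_sq.
have [v2 /set_mem [K1v2 Gv2] v2max] := EVT_max_rV K2ne cK2 (continuous_subspaceT cQ).
have Fv1 : FWobj t w (toF v1) <= FWobj t w 0 by apply: Gmin.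
have inK2 y : inFW t w y -> K2 (toV y).
  move=> [Hy Hym].
  have Ey : FWobj t w y = FWobj t w (toF v1).
    by apply/le_anti; rewrite Gmin // andbT; apply: Hym; case: K1v1.
  split; last by rewrite /= /G toVK Ey.
  by apply: inK1 => //; rewrite Ey.
have FWx2 : inFW t w (toF v2).
  split; first by case: K1v2.
  by move=> y Hy; have := Gv2; rewrite /= /G => ->; apply: Gmin.
exists (toF v2); split => // y z a FWy FWz a0 a1 Hx.
have Qy := v2max _ (mem_set (inK2 _ FWy)); rewrite /Q toVK in Qy.
have Qz := v2max _ (mem_set (inK2 _ FWz)); rewrite /Q toVK in Qz.
pose T p := (a * (1 - a)) * ((y p - z p) * (y p - z p)).
have T0 p : 0 <= T p.
  apply: mulr_ge0; first by apply: mulr_ge0; lra.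
  by rewrite -expr2 sqr_ge0.
have ST : \sum_p T p = a * \sum_p y p * y p + (1 - a) * \sum_p z p * z p
    - \sum_p toF v2 p * toF v2 p.
  rewrite (eq_bigr (fun p => a * (y p * y p) + (1 - a) * (z p * z p) - toF v2 p * toF v2 p)).
    by rewrite sumrB big_split /= -!mulr_sumr.
  by move=> p _; rewrite Hx /T; ring.
have S0 : \sum_p T p <= 0.
  rewrite ST.
  have : a * \sum_p y p * y p <= a * \sum_p toF v2 p * toF v2 p by rewrite ler_pM2l.
  have : (1 - a) * \sum_p z p * z p <= (1 - a) * \sum_p toF v2 p * toF v2 p.
    by rewrite ler_pM2l // subr_gt0.
  lra.
apply/ffunP => p.
have Tp : T p = 0.
  apply/le_anti; rewrite T0 andbT; apply: le_trans S0.
  by rewrite (bigD1 p) //= lerDl; apply: sumr_ge0 => q _.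
move: Tp; rewrite /T => /eqP; rewrite mulf_eq0 => /orP[|].
  by rewrite mulf_eq0 subr_eq0 => /orP[] /eqP; lra.
by rewrite mulf_eq0 orbb subr_eq0 => /eqP.
Qed.

Lemma ler_sum_seq (R : realType) (T : eqType) (s : seq T) (F G : T -> R) :
  (forall v, v \in s -> true -> F v <= G v) -> \sum_(v <- s) F v <= \sum_(v <- s) G v.
Proof. by move=> H; rewrite big_seq [X in _ <= X]big_seq; apply: ler_sum => u us; apply: H. Qed.

Lemma sum_lt_seq (R : realType) (T : eqType) (s : seq T) (F G : T -> R) :
  (0 < size s)%N -> (forall v, v \in s -> F v < G v) -> \sum_(v <- s) F v < \sum_(v <- s) G v.
Proof.
case: s => [//|v s] _ H; rewrite !big_cons; apply: ltr_leD; first by apply: H; rewrite inE eqxx.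
by apply: ler_sum_seq => u us _; apply: ltW; apply: H; rewrite inE us orbT.
Qed.

Theorem corollary4p4 (R : realType) (n m : nat)
  (t : 'I_m -> pt R n) (w : 'I_m -> R) (c : pt R n) :
  (3 <= n)%N -> (0 < m)%N ->
  (forall l, inTn (t l)) -> (forall l, 0 < w l) ->
  is_consensus t w c ->
  forall i j k : 'I_n, i != j -> i != k -> j != k ->
    ((forall l, contains_triple (t l) i j k) -> contains_triple c i j k) /\
    (contains_triple c i j k -> exists l, contains_triple (t l) i j k).
Proof.
move=> n3 m0 Ht Hw [s [us Hs Hc]] i j k ij ik jk.
have C0 : (0 < 'C(n, 2))%N by rewrite bin_gt0; apply: leq_trans n3.
have HtH l : inH (t l) by case: (Ht l).
have [pij Eij] := ent_pair R ij.
have [pik Eik] := ent_pair R ik.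
have [pjk Ejk] := ent_pair R jk.
have Hrep v : v \in s -> (forall p, exists l, v p = t l p + hval v (t l)) /\
    (forall l p, v p <= t l p + hval v (t l)).
  move/Hs => [Hv _]; split; first exact: (FW_minplus m0 C0 HtH Hw Hv).
  by move=> l p; rewrite -lerBlDl; apply: (le_bigmax _ (fun q => v q - t l q)).
have Hcp p : c p = (size s)%:R^-1 * \sum_(v <- s) v p by apply: Hc.
split.
- move=> Hall.
  have Hl l : t l pik < t l pij /\ t l pik = t l pjk.
    have := Hall l; rewrite /contains_triple /= !Eij !Eik !Ejk !ffunE.
    by rewrite ltrN2 => -[? /eqP]; rewrite eqr_opp => /eqP.
  have Hv v : v \in s -> v pik < v pij /\ v pik = v pjk.
    move=> /Hrep [Hex Hle].
    have [l1 E1] := Hex pij; have [l2 E2] := Hex pik; have [l3 E3] := Hex pjk.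
    have a1 := Hle l1 pik; have a2 := Hle l2 pjk; have a3 := Hle l3 pik.
    have [b1 b1'] := Hl l1; have [b2 b2'] := Hl l2; have [b3 b3'] := Hl l3.
    split; lra.
  have [v0 Hv0] := FW_vertex n3 m0 HtH Hw.
  have s0 : (0 < size s)%N by case: s Hs {Hv Hrep Hc Hcp us} => // /(_ v0) [_ /(_ Hv0)].
  rewrite /contains_triple /= !Eij !Eik !Ejk !ffunE ltrN2 !Hcp; split.
    rewrite ltr_pM2l; last by rewrite invr_gt0 ltr0n.
    by apply: sum_lt_seq => // v /Hv [].
  congr (- (_ * _)); apply: eq_big_seq => v /Hv [_ ->] //.
- move=> Hc3.
  case: (boolP [exists l, (- t l pij < - t l pik) && (- t l pik == - t l pjk)]).
    case/existsP => l /andP[h1 /eqP h2]; exists l.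
    by rewrite /contains_triple /= !Eij !Eik !Ejk !ffunE.
  move/existsPn => Hno; exfalso.
  have Hl l : t l pij <= t l pik.
    have U := (Ht l).2 i j k ij ik jk; rewrite /= !Eij !Eik !Ejk !ffunE in U.
    have := Hno l; case/orP: U => [/andP[/eqP u1 u2]|/orP[/andP[/eqP u1 u2]|/andP[/eqP u1 u2]]] H.
    + lra.
    + lra.
    + have [ab|ba] := ltrP (- t l pij) (- t l pik); last lra.
      by move: H; rewrite ab u1 eqxx.
  have Hv v : v \in s -> v pij <= v pik.
    move=> /Hrep [Hex Hle].
    have [l2 E2] := Hex pik; have a1 := Hle l2 pij; have := Hl l2; lra.
  move: Hc3; rewrite /contains_triple /= !Eij !Eik !ffunE ltrN2 !Hcp => -[+ _].
  apply/negP; rewrite -leNgt; apply: ler_wpM2l; first by rewrite invr_ge0 ler0n.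
  by apply: ler_sum_seq => v vs _; apply: Hv.
Qed.
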